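(* Let $\mathbf k$ be a commutative domain of characteristic zero and let $\omega=xy-(\phi(x)+y\psi(x))$ with $\phi,\psi\in\mathbf k[x]$ both nonzero. Then there exists a commutative Rota-Baxter algebra $(R,P)$ of weight $0$ such that the $\omega$-cover $\widetilde P$ of $P$ on $R^{\mathbb N}$ (weight-$0$ Hurwitz product) is not a Rota-Baxter operator of weight $0$.
   Context: A Rota-Baxter operator of weight $0$ on an algebra $A$ is a $\mathbf{k}$-linear $P$ with $P(x)P(y)=P(P(x)y)+P(xP(y))$. $R^{\mathbb N}$ is the set of sequences $(f_n)_{n\in\mathbb N}$ in $R$ with product $(fg)_n=\sum_{j=0}^n\binom{n}{j}f_{n-j}g_j$, and $(\partial_R f)_n=f_{n+1}$. For $\phi=\sum_{i=0}^r a_ix^i$, $\psi=\sum_{j=0}^s b_jx^j$, the $\omega$-cover $\widetilde P$ of $P$ is the unique linear operator on $R^{\mathbb N}$ with $\widetilde P_0(f)=P(f_0)$ and $\widetilde P_n(f)=\sum_{i=0}^r a_if_{n-1+i}+\sum_{j=0}^s b_j\widetilde P_{n-1}(\partial_R^jf)$ for $n\ge1$, where $\widetilde P_n(f):=\widetilde P(f)_n$. *)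

(* Defs.v *)
From HB Require Import structures.
From mathcomp Require Import all_boot all_order all_algebra.
Set Implicit Arguments. Unset Strict Implicit. Unset Printing Implicit Defensive.
Import Order.TTheory GRing.Theory Num.Theory.
Local Open Scope ring_scope.

Definition is_RB0 (k : comNzRingType) (A : comAlgType k) (P : {linear A -> A}) : Prop :=
  forall x y : A, P x * P y = P (P x * y) + P (x * P y).

Definition hurwitz_mul (R : comNzRingType) (f g : nat -> R) : nat -> R :=
  fun n => \sum_(j < n.+1) (f (n - j)%N * g j) *+ 'C(n, j).

(* derivation: (d f)_n = f_{n+1}; iterated j times: (d^j f)_n = f_{n+j} *)
Definition hshift (R : Type) (j : nat) (f : nat -> R) : nat -> R :=
  fun m => f (m + j)%N.

Fixpoint omega_cover_n (k : comNzRingType) (A : comAlgType k)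
    (phi psi : {poly k}) (P : A -> A) (n : nat) (f : nat -> A) : A :=
  match n with
  | 0 => P (f 0%N)
  | n'.+1 => \sum_(i < size phi) phi`_i *: f (n' + i)%N
             + \sum_(j < size psi) psi`_j *: omega_cover_n phi psi P n' (hshift j f)
  end.

Definition omega_cover (k : comNzRingType) (A : comAlgType k)
    (phi psi : {poly k}) (P : A -> A) (f : nat -> A) : nat -> A :=
  fun n => omega_cover_n phi psi P n f.

Definition is_RB0_seq (R : comNzRingType) (Q : (nat -> R) -> (nat -> R)) : Prop :=
  forall (f g : nat -> R) (n : nat),
    hurwitz_mul (Q f) (Q g) n = Q (hurwitz_mul (Q f) g) n + Q (hurwitz_mul f (Q g)) n.

(* Main.v *)
Require Import Defs.
From HB Require Import structures.
From mathcomp Require Import all_boot all_order all_algebra.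
From mathcomp Require Import zify ring.
Import GRing.Theory.
Local Open Scope ring_scope.

Definition ee (R : comNzRingType) (m : nat) : nat -> R :=
  fun i => if i == m then 1 else 0.

Lemma sum_single (R : zmodType) n (F : nat -> R) m : (m < n)%N ->
  (forall l, (l < n)%N -> l != m -> F l = 0) -> \sum_(l < n) F l = F m.
Proof.
move=> hm hF; rewrite (bigD1 (Ordinal hm)) //= big1 ?addr0 // => j hj.
apply: hF => //; apply: contra hj => /eqP h; apply/eqP/val_inj.
Qed.

Lemma sum_zero (R : zmodType) n (F : nat -> R) :
  (forall l, (l < n)%N -> F l = 0) -> \sum_(l < n) F l = 0.
Proof. by move=> hF; rewrite big1 // => j _; apply: hF. Qed.

Lemma hm_e_r (R : comNzRingType) (F : nat -> R) m i :
  hurwitz_mul F (ee R m) i = if (m <= i)%N then F (i - m)%N *+ 'C(i, m) else 0.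
Proof.
rewrite /hurwitz_mul; case: leqP => [le|lt].
- rewrite (@sum_single _ _ (fun j => (F (i - j)%N * ee R m j) *+ 'C(i, j)) m) //.
    by rewrite /ee eqxx mulr1.
  by move=> l _ hl; rewrite /ee (negbTE hl) mulr0 mul0rn.
- rewrite big1 // => l _; rewrite /ee ifF ?mulr0 ?mul0rn //.
  by apply/negbTE/eqP => h; have := ltn_ord l; lia.
Qed.

Lemma hm_e_l (R : comNzRingType) (G : nat -> R) m i :
  hurwitz_mul (ee R m) G i = if (m <= i)%N then G (i - m)%N *+ 'C(i, m) else 0.
Proof.
rewrite /hurwitz_mul; case: leqP => [le|lt].
- rewrite (@sum_single _ _ (fun j => (ee R m (i - j) * G j) *+ 'C(i, j)) (i - m)%N); last first.
    move=> l hl hlm; rewrite /ee ifF ?mul0r ?mul0rn //.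
    by apply/negbTE/eqP => h; move/eqP: hlm; lia.
    by lia.
  by rewrite /ee subKn // eqxx mul1r bin_sub.
- rewrite big1 // => l _; rewrite /ee ifF ?mul0r ?mul0rn //.
  by apply/negbTE/eqP => h; have := ltn_ord l; lia.
Qed.

Section Cover.
Variable k : idomainType.
Definition P0 : {linear k^o -> k^o} := \0.
Lemma hP (x : k^o) : P0 x = 0. Proof. by []. Qed.
Lemma rb : is_RB0 P0. Proof. by move=> x y; rewrite !hP mulr0 addr0. Qed.
Lemma sc (a x : k^o) : a *: x = a * x. Proof. by []. Qed.

Variables phi psi : {poly k}.
Notation Q := (omega_cover_n phi psi P0).

Lemma Q0 X : Q 0 X = 0. Proof. by []. Qed.
Lemma Q1 X : Q 1 X = \sum_(i < size phi) phi`_i * X i.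
Proof.
rewrite /= (@sum_zero _ _ (fun j => psi`_j *: P0 (hshift j X 0%N))) ?addr0.
  by apply: eq_bigr => i _; rewrite add0n.
by move=> l _; rewrite hP scaler0.
Qed.
Lemma QS n X : Q n.+1 X = \sum_(i < size phi) phi`_i * X (n + i)%N
   + \sum_(j < size psi) psi`_j * Q n (hshift j X).
Proof. by []. Qed.

Lemma natr_neq0 (hchar : [pchar k] =i pred0) n : (0 < n)%N -> (n%:R : k) != 0.
Proof. by move=> hn; rewrite (proj1 (pcharf0P k) hchar) -lt0n. Qed.

Lemma case1 (hchar : [pchar k] =i pred0) (hphi : phi != 0) :
  (1 < size phi)%N -> ~ is_RB0_seq (omega_cover phi psi P0).
Proof.
move=> hs H.
set r := (size phi).-1.
have hr : size phi = r.+1 by rewrite /r; lia.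
have hr1 : (1 <= r)%N by rewrite /r; lia.
have Qf1 : Q 1 (ee _ r) = phi`_r.
  rewrite Q1 (@sum_single _ _ (fun i => phi`_i * ee _ r i) r); first by rewrite /ee eqxx mulr1.
    by rewrite hr.
  by move=> l _ hl; rewrite /ee (negbTE hl) mulr0.
move: (H (ee _ r) (ee _ r.-1) 1%N).
have -> : hurwitz_mul (omega_cover phi psi P0 (ee _ r)) (omega_cover phi psi P0 (ee _ r.-1)) 1 = 0.
  by rewrite /hurwitz_mul !big_ord_recl big_ord0 /omega_cover !Q0 !mulr0 !mul0r !mul0rn !addr0.
rewrite /omega_cover !Q1.
rewrite (@sum_zero _ _ (fun i => phi`_i * hurwitz_mul (ee _ r) (fun n => Q n (ee _ r.-1)) i)); last first.
  move=> l hl; rewrite hm_e_l; case: ifP => h; last by rewrite mulr0.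
  have -> : (l - r = 0)%N by lia.
  by rewrite Q0 mul0rn mulr0.
rewrite (@sum_single _ _ (fun i => phi`_i * hurwitz_mul (fun n => Q n (ee _ r)) (ee _ r.-1) i) r); last first.
    move=> l hl hlr; rewrite hm_e_r; case: ifP => h; last by rewrite mulr0.
    have -> : (l - r.-1 = 0)%N by move/eqP: hlr; lia.
    by rewrite Q0 mul0rn mulr0.
  by rewrite hr.
rewrite hm_e_r ifT; last by lia.
have -> : (r - r.-1 = 1)%N by lia.
have -> : 'C(r, r.-1) = r.
  by rewrite -bin_sub ?leq_pred // (_ : (r - r.-1 = 1)%N) ?bin1 //; lia.
rewrite Qf1 addr0 -mulr_natr => /eqP; apply/negP; rewrite eq_sym.
have hl : phi`_r != 0 by rewrite /r -lead_coefE lead_coef_eq0.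
by rewrite !mulf_neq0 // natr_neq0.
Qed.

Section R0.
Hypothesis hp1 : size phi = 1%N.
Lemma Q1' X : Q 1 X = phi`_0 * X 0%N.
Proof. by rewrite Q1 hp1 big_ord1. Qed.
Lemma QS' n X : Q n.+1 X = phi`_0 * X n + \sum_(j < size psi) psi`_j * Q n (hshift j X).
Proof. by rewrite QS hp1 big_ord1 addn0. Qed.

Lemma case2 (hchar : [pchar k] =i pred0) (hphi : phi != 0) (hpsi : psi != 0) :
  size psi = 1%N -> ~ is_RB0_seq (omega_cover phi psi P0).
Proof.
move=> hs H.
have ha : phi`_0 != 0 by move: hphi; rewrite -lead_coef_eq0 lead_coefE hp1.
have hb : psi`_0 != 0 by move: hpsi; rewrite -lead_coef_eq0 lead_coefE hs.
set a := phi`_0 in ha; set b := psi`_0 in hb.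
have S1 : forall n X, Q n.+1 X = a * X n + b * Q n (hshift 0 X).
  by move=> n X; rewrite QS' hs big_ord1.
set q := omega_cover phi psi P0 (ee _ 0).
have Q2f : forall X, Q 2 X = a * X 1%N + b * (a * X 0%N).
  by move=> X; rewrite S1 Q1' /hshift.
have Q3f : forall X, Q 3 X = a * X 2%N + b * (a * X 1%N + b * (a * X 0%N)).
  by move=> X; rewrite S1 Q2f /hshift.
have q0 : q 0%N = 0 by [].
have q1 : q 1%N = a by rewrite /q /omega_cover Q1' /ee eqxx mulr1.
have q2 : q 2%N = b * a by rewrite /q /omega_cover Q2f /ee /= mulr0 add0r mulr1.
have q3 : q 3%N = b * b * a.
  by rewrite /q /omega_cover Q3f /ee /= !mulr0 !add0r mulr1 mulrA.
move: (H (ee _ 0) (ee _ 0) 3%N).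
rewrite -/q /omega_cover !Q3f !hm_e_r !hm_e_l /= !subn0 !bin0 !mulr1n.
rewrite /hurwitz_mul !big_ord_recl big_ord0 /bump /= q0 q1 q2 q3.
move/eqP; rewrite -subr_eq0 => /eqP E.
have : a * a * b * 2%:R = 0.
  apply: (etrans _ E); rewrite (_ : 'C(3, bump 0 0) = 3%N) // (_ : 'C(3, bump 0 (bump 0 0)) = 3%N) //.
  ring.
by apply/eqP; rewrite !mulf_neq0 // natr_neq0.
Qed.

Lemma Q2g X : Q 2 X = phi`_0 * X 1%N + \sum_(j < size psi) psi`_j * (phi`_0 * X j).
Proof. by rewrite QS'; congr (_ + _); apply: eq_bigr => j _; rewrite Q1' /hshift add0n. Qed.

Lemma case3 (hchar : [pchar k] =i pred0) (hphi : phi != 0) (hpsi : psi != 0) :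
  size psi = 2%N -> ~ is_RB0_seq (omega_cover phi psi P0).
Proof.
move=> hs H.
have ha : phi`_0 != 0 by move: hphi; rewrite -lead_coef_eq0 lead_coefE hp1.
have hb : psi`_1 != 0 by move: hpsi; rewrite -lead_coef_eq0 lead_coefE hs.
set a := phi`_0 in ha; set b1 := psi`_1 in hb; set b0 := psi`_0.
have Q2f : forall X, Q 2 X = a * X 1%N + (b0 * (a * X 0%N) + b1 * (a * X 1%N)).
  by move=> X; rewrite Q2g hs !big_ord_recl big_ord0 addr0.
set q := omega_cover phi psi P0 (ee _ 0).
have q0 : q 0%N = 0 by [].
have q1 : q 1%N = a by rewrite /q /omega_cover Q1' /ee eqxx mulr1.
have q2 : q 2%N = b0 * a by rewrite /q /omega_cover Q2f /ee /= !mulr0 !mulr1 add0r addr0.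
move: (H (ee _ 0) (ee _ 0) 2%N).
rewrite -/q /omega_cover !Q2f !hm_e_r !hm_e_l /= !subn0 !bin0 !mulr1n.
rewrite /hurwitz_mul !big_ord_recl big_ord0 /= q0 q1 q2.
move/eqP; rewrite eq_sym -subr_eq0 => /eqP E.
have : a * a * b1 * 2%:R = 0.
  apply: (etrans _ E); rewrite (_ : 'C(2, bump 0 0) = 2%N) //.
  ring.
by apply/eqP; rewrite !mulf_neq0 // natr_neq0.
Qed.


Lemma Q2o X : omega_cover phi psi P0 X 2%N =
  phi`_0 * X 1%N + \sum_(j < size psi) psi`_j * (phi`_0 * X j).
Proof. exact: Q2g. Qed.

Lemma case4 (hchar : [pchar k] =i pred0) (hphi : phi != 0) (hpsi : psi != 0) :
  (2 < size psi)%N -> ~ is_RB0_seq (omega_cover phi psi P0).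
Proof.
move=> hs2 H.
set s := (size psi).-1.
have hs : size psi = s.+1 by rewrite /s; lia.
have hs1 : (2 <= s)%N by rewrite /s; lia.
have ha : phi`_0 != 0 by move: hphi; rewrite -lead_coef_eq0 lead_coefE hp1.
have hb : psi`_s != 0 by move: hpsi; rewrite -lead_coef_eq0 lead_coefE.
set a := phi`_0 in ha *; set b := psi`_s in hb.
set Qf := omega_cover phi psi P0 (ee _ s).
set Qg := omega_cover phi psi P0 (ee _ (s - 2)).
have Qf0 : Qf 0%N = 0 by [].
have Qg0 : Qg 0%N = 0 by [].
have Qf1 : Qf 1%N = 0.
  rewrite /Qf /omega_cover Q1' /ee ifF ?mulr0 //; by apply/negbTE/eqP; lia.
have Qf2 : Qf 2%N = b * a.
  rewrite /Qf Q2o /ee ifF ?mulr0 ?add0r; last by apply/negbTE/eqP; lia.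
  rewrite (@sum_single _ _ (fun j => psi`_j * (a * (if j == s then 1 else 0))) s).
      by rewrite eqxx mulr1 mulrC.
    by rewrite hs.
  by move=> l _ hl; rewrite (negbTE hl) !mulr0.
move: (H (ee _ s) (ee _ (s - 2)) 2%N); rewrite -/Qf -/Qg.
have -> : hurwitz_mul Qf Qg 2 = 0.
  rewrite /hurwitz_mul !big_ord_recl big_ord0 /=.
  by rewrite Qf0 Qg0 Qf1 !mulr0 !mul0r !mul0rn !addr0.
rewrite !Q2o.
have H1s : forall i, (i < s)%N -> hurwitz_mul Qf (ee _ (s - 2)) i = 0.
  move=> i hi; rewrite hm_e_r; case: ifP => h //.
  case E: (i - (s - 2))%N => [|[|m]]; first by rewrite Qf0 mul0rn.
    by rewrite Qf1 mul0rn.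
  by lia.
have H2s : forall i, (i <= s)%N -> hurwitz_mul (ee _ s) Qg i = 0.
  move=> i hi; rewrite hm_e_l; case: ifP => h //.
  have -> : (i - s = 0)%N by lia.
  by rewrite Qg0 mul0rn.
rewrite (H1s 1%N) ?(H2s 1%N) //; try lia.
rewrite (@sum_zero _ _ (fun j => psi`_j * (a * hurwitz_mul (ee _ s) Qg j))); last first.
  by move=> l hl; rewrite H2s ?mulr0 //; rewrite hs in hl; lia.
rewrite (@sum_single _ _ (fun j => psi`_j * (a * hurwitz_mul Qf (ee _ (s - 2)) j)) s); last first.
    by move=> l hl hls; rewrite H1s ?mulr0 //; rewrite hs in hl; move/eqP: hls; lia.
  by rewrite hs.
rewrite hm_e_r ifT; last by lia.
have -> : (s - (s - 2) = 2)%N by lia.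
rewrite Qf2 !mulr0 !add0r addr0 -mulr_natr => /eqP; apply/negP; rewrite eq_sym.
have hC : (0 < 'C(s, s - 2))%N by rewrite bin_gt0; lia.
by rewrite !mulf_neq0 // natr_neq0.
Qed.

End R0.
End Cover.

Theorem proposition3p7 (k : idomainType) (hchar : [pchar k] =i pred0)
  (phi psi : {poly k}) (hphi : phi != 0) (hpsi : psi != 0) :
  exists (R : comAlgType k) (P : {linear R -> R}),
    is_RB0 P /\ ~ is_RB0_seq (omega_cover phi psi P).
Proof.
exists k^o, (P0 k); split; first exact: rb.
have h1 : (0 < size phi)%N by rewrite size_poly_gt0.
have h2 : (0 < size psi)%N by rewrite size_poly_gt0.
case: (ltnP 1 (size phi)) => hp; first exact: case1.
have hp1 : size phi = 1%N by lia.
case: (ltnP 2 (size psi)) => hq; first exact: case4.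
case E: (size psi) => [|[|[|m]]]; first by lia.
- exact: case2.
- exact: case3.
- by lia.
Qed.
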